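(* Let $\langle A;\cdot\rangle$ be a groupoid with an identity element which is an Abelian algebra. Then $\langle A;\cdot\rangle$ is a Hamiltonian algebra if and only if $\langle A;\cdot\rangle$ is a periodic commutative group (every element has finite order).
   Context: A groupoid is an algebra $\langle A;\cdot\rangle$ with one binary operation (its subalgebras are the nonempty subsets closed under $\cdot$); an identity element is $1\in A$ with $1\cdot a=a\cdot 1=a$ for all $a$. A polynomial operation of an algebra is an operation obtained from a term by substituting elements of the algebra for some of its variables. An algebra is called Abelian if for every polynomial operation $t(x,y_1,\ldots,y_n)$ and all elements $u,v,c_1,\ldots,c_n,d_1,\ldots,d_n$ of the algebra, $t(u,c_1,\ldots,c_n)=t(u,d_1,\ldots,d_n)$ implies $t(v,c_1,\ldots,c_n)=t(v,d_1,\ldots,d_n)$. An algebra is called Hamiltonian if the universe of every subalgebra is an equivalence class (block) of some congruence of the algebra. *)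

(* Defs.v *)
From Stdlib Require Import Arith.

Set Implicit Arguments.

(* Terms of the groupoid language in variables indexed by nat,
   with constants from A (for polynomial operations). *)
Inductive term (A : Type) : Type :=
| Var : nat -> term A
| Cst : A -> term A
| App : term A -> term A -> term A.

Arguments Var {A} _.

Fixpoint eval (A : Type) (op : A -> A -> A) (env : nat -> A) (t : term A) : A :=
  match t with
  | Var i => env i
  | Cst a => a
  | App t1 t2 => op (eval op env t1) (eval op env t2)
  end.

Definition cons_env (A : Type) (u : A) (c : nat -> A) : nat -> A :=
  fun i => match i with 0 => u | S j => c j end.

(* Polynomial operations t(x, y_1, ..., y_n) are exactly the maps
   (u, c) |-> eval op (cons_env u c) t for terms t with constants
   (only finitely many variables occur in t). *)
Definition Abelian (A : Type) (op : A -> A -> A) : Prop :=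
  forall (t : term A) (u v : A) (c d : nat -> A),
    eval op (cons_env u c) t = eval op (cons_env u d) t ->
    eval op (cons_env v c) t = eval op (cons_env v d) t.

Definition is_identity (A : Type) (op : A -> A -> A) (e : A) : Prop :=
  forall a, op e a = a /\ op a e = a.

Definition is_subalgebra (A : Type) (op : A -> A -> A) (S : A -> Prop) : Prop :=
  (exists a, S a) /\ (forall a b, S a -> S b -> S (op a b)).

Definition is_congruence (A : Type) (op : A -> A -> A) (R : A -> A -> Prop) : Prop :=
  (forall a, R a a) /\
  (forall a b, R a b -> R b a) /\
  (forall a b c, R a b -> R b c -> R a c) /\
  (forall a a' b b', R a a' -> R b b' -> R (op a b) (op a' b')).

Definition Hamiltonian (A : Type) (op : A -> A -> A) : Prop :=
  forall S : A -> Prop, is_subalgebra op S ->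
    exists (R : A -> A -> Prop) (a : A),
      is_congruence op R /\ (forall x, S x <-> R a x).

Fixpoint pw (A : Type) (op : A -> A -> A) (e : A) (x : A) (n : nat) : A :=
  match n with
  | 0 => e
  | S m => op x (pw op e x m)
  end.

Definition periodic_comm_group (A : Type) (op : A -> A -> A) (e : A) : Prop :=
  (forall a b c, op (op a b) c = op a (op b c)) /\
  (forall a b, op a b = op b a) /\
  is_identity op e /\
  (forall a, exists b, op a b = e /\ op b a = e) /\
  (forall a, exists n, 0 < n /\ pw op e a n = e).

(* Main.v *)
Require Import Defs.
From Stdlib Require Import Arith Lia.

Section S.
Variables (A : Type) (op : A -> A -> A) (e : A).
Hypothesis he : is_identity op e.
Hypothesis hab : Abelian op.

Lemma idl a : op e a = a. Proof. apply he. Qed.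
Lemma idr a : op a e = a. Proof. apply he. Qed.

Lemma keyL a v b : op a (op v b) = op (op a b) v.
Proof.
  pose (c := fun i : nat => match i with 0 => a | _ => b end).
  pose (d := fun i : nat => match i with 0 => op a b | _ => e end).
  pose proof (hab (App (Var 1) (App (Var 0) (Var 2))) e v c d) as HH; revert HH.
  cbn. rewrite !idl, !idr. intro H. apply H. reflexivity.
Qed.

Lemma commL a b : op a b = op b a.
Proof. rewrite <- (idl (op a b)), keyL, idl. reflexivity. Qed.

Lemma assocL a b c : op (op a b) c = op a (op b c).
Proof. rewrite <- keyL, (commL c b). reflexivity. Qed.

Lemma cancelL c d u : op c u = op d u -> c = d.
Proof.
  intro H.
  pose proof (hab (App (Var 1) (Var 0)) u e (fun _ => c) (fun _ => d)) as HH; revert HH.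
  cbn. rewrite !idr. intro H'. apply H'. exact H.
Qed.

Lemma pw_add a n m : pw op e a (n + m) = op (pw op e a n) (pw op e a m).
Proof.
  induction n as [|n IH]; cbn.
  - rewrite idl. reflexivity.
  - rewrite IH, assocL. reflexivity.
Qed.
End S.

Lemma backward (A : Type) (op : A -> A -> A) (e : A) :
  periodic_comm_group op e -> Hamiltonian op.
Proof.
  intros [assoc [comm [hid [_ per]]]] Sb [[a0 Sa0] cl].
  assert (pwS : forall s m, Sb s -> Sb (pw op e s (S m))).
  { intros s m Ss; induction m as [|m IH]; cbn in *.
    - rewrite (proj2 (hid s)). exact Ss.
    - apply cl; assumption. }
  assert (Se : Sb e).
  { destruct (per a0) as [n [Hn Hp]]. destruct n; [lia|].
    rewrite <- Hp. apply pwS; exact Sa0. }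
  assert (inv : forall s, Sb s -> exists s', Sb s' /\ op s' s = e).
  { intros s Ss. destruct (per s) as [n [Hn Hp]].
    destruct n as [|[|m]]; [lia| |].
    - exists s. cbn in Hp. rewrite (proj2 (hid s)) in Hp. subst s.
      split; [exact Se| apply hid].
    - exists (pw op e s (S m)). split; [apply pwS; exact Ss|].
      rewrite comm. exact Hp. }
  exists (fun x y => exists s, Sb s /\ y = op s x), e.
  split; [split; [|split; [|split]]|].
  - intro a. exists e. split; [exact Se| symmetry; apply hid].
  - intros a b [s [Ss ->]]. destruct (inv s Ss) as [s' [Ss' Hs']].
    exists s'. split; [exact Ss'|]. rewrite <- assoc, Hs'. symmetry; apply hid.
  - intros a b c [s [Ss ->]] [t [St ->]]. exists (op t s).
    split; [apply cl; assumption| rewrite assoc; reflexivity].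
  - intros a a' b b' [s [Ss ->]] [t [St ->]]. exists (op s t).
    split; [apply cl; assumption|].
    rewrite !assoc. f_equal. rewrite <- !assoc. f_equal. apply comm.
  - intro x. split.
    + intro Sx. exists x. split; [exact Sx| symmetry; apply hid].
    + intros [s [Ss ->]]. rewrite (proj2 (hid s)). exact Ss.
Qed.

Theorem mainTheorem5 (A : Type) (op : A -> A -> A) (e : A)
  (he : is_identity op e) (hab : Abelian op) :
  Hamiltonian op <-> periodic_comm_group op e.
Proof.
  split; [|apply backward].
  intro hH.
  assert (per : forall a, exists n, 0 < n /\ pw op e a n = e).
  { intro a.
    set (Sb := fun x => exists n, (n = 2 \/ 4 <= n) /\ x = pw op e a n).
    assert (sub : is_subalgebra op Sb).
    { split.
      - exists (pw op e a 2). exists 2. split; [left; reflexivity| reflexivity].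
      - intros x y [n [Hn ->]] [m [Hm ->]]. exists (n + m).
        split; [lia| symmetry; apply (pw_add _ _ _ he hab)]. }
    destruct (hH Sb sub) as [R [a0 [[Rr [Rs [Rt Rc]]] hb]]].
    assert (R2 : R a0 (pw op e a 2)) by (apply hb; exists 2; split; [left|]; reflexivity).
    assert (R4 : R a0 (pw op e a 4)) by (apply hb; exists 4; split; [right; lia|]; reflexivity).
    assert (R24 : R (pw op e a 2) (pw op e a 4)) by eauto.
    assert (R35 : R (pw op e a 3) (pw op e a 5)) by (apply Rc; auto).
    assert (R5 : R a0 (pw op e a 5)) by (apply hb; exists 5; split; [right; lia|]; reflexivity).
    assert (S3 : Sb (pw op e a 3)) by (apply hb; eauto).
    destruct S3 as [n [[-> | Hn] H3]].
    - exists 1. split; [lia|].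
      assert (a = e).
      { apply (cancelL _ _ _ he hab) with (u := pw op e a 2).
        rewrite (idl _ _ _ he). exact H3. }
      cbn. rewrite (idr _ _ _ he). assumption.
    - exists (n - 3). split; [lia|].
      apply (cancelL _ _ _ he hab) with (u := pw op e a 3).
      rewrite <- (pw_add _ _ _ he hab), (idl _ _ _ he).
      replace (n - 3 + 3) with n by lia. symmetry; exact H3. }
  split; [|split; [|split; [|split]]].
  - apply (assocL _ _ _ he hab).
  - apply (commL _ _ _ he hab).
  - exact he.
  - intro a. destruct (per a) as [n [Hn Hp]]. destruct n; [lia|].
    exists (pw op e a n). split; [exact Hp|]. rewrite (commL _ _ _ he hab). exact Hp.
  - exact per.
Qed.
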